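(* Let $G$ be an unweighted graph (loops allowed) and let $F$ be a bipartite graph on vertices $v_1,\dots,v_m$. Let $H$ be an $\mathcal{H}$-blow-up of $F$ with blown-up graphs $H_1,\dots,H_m$, where $\mathcal{H}$ is the class of graphs that are cross-bipartite swapping in $G$. Then for every $U\subseteq V(F)$ and every $u\in V(F)\setminus U$, \[ \hom(H^{U},G)\le\hom(H^{U\cup\{u\}},G). \]
   Context: $\hom(\cdot,G)$ counts homomorphisms into $G$. The tensor product $H'\times K_2$ has vertex set $V(H')\times\{1,2\}$, with $(x,i)\sim(y,j)$ iff $xy\in E(H')$ and $i\ne j$. For $A,B\subseteq V(G)$, $\hom_{\mathrm b}(H'\times K_2,G[A,B])$ counts homomorphisms $H'\times K_2\to G$ mapping $V(H')\times\{1\}$ into $A$ and $V(H')\times\{2\}$ into $B$; $H'$ is cross-bipartite swapping in $G$ if $\hom(H',G[A])\hom(H',G[B])\le\hom_{\mathrm b}(H'\times K_2,G[A,B])$ for all $A,B\subseteq V(G)$. The $\mathcal{H}$-blow-up $H$ of $F$ is the disjoint union of $H_1,\dots,H_m\in\mathcal{H}$ (on vertex sets $V_1,\dots,V_m$) with all edges between $V_i$ and $V_j$ added whenever $v_iv_j\in E(F)$. For $U\subseteq V(F)$, the graph $H^{U}$ is defined as follows: take two vertex-disjoint copies of $H$, on $\bigsqcup_i W_i$ and $\bigsqcup_i W_i'$, where $W_i,W_i'$ are copies of $V_i$; then for each $j$ with $v_j\in U$, delete all edges inside $W_j$ and inside $W_j'$ and instead join the copy $w\in W_j$ of $x\in V_j$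 to the copy $w'\in W_j'$ of $y\in V_j$ whenever $xy\in E(H_j)$ (so the graph on $W_j\sqcup W_j'$ becomes $H_j\times K_2$ instead of $H_j\sqcup H_j$). All other edges are as in the two copies of $H$. *)

(* Defs.v *)
From mathcomp Require Import all_boot.
Set Implicit Arguments. Unset Strict Implicit. Unset Printing Implicit Defensive.

Definition symmetric_rel (T : Type) (e : rel T) := forall x y, e x y = e y x.
Definition simple_rel (T : Type) (e : rel T) :=
  symmetric_rel e /\ forall x, ~~ e x x.

Definition hom_restr (V T : finType) (e : rel V) (g : rel T) (P : V -> pred T) : nat :=
  #|[set f : {ffun V -> T} |
       [forall x, f x \in P x] && [forall x, forall y, e x y ==> g (f x) (f y)]]|.

Definition hom (V T : finType) (e : rel V) (g : rel T) : nat :=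
  hom_restr e g (fun _ => predT).

(* hom(H', G[A]) : homomorphisms into the induced subgraph G[A] *)
Definition hom_ind (V T : finType) (e : rel V) (g : rel T) (A : {set T}) : nat :=
  hom_restr e g (fun _ => mem A).

(* tensor product H' x K_2 on V * bool; side 1 = false, side 2 = true *)
Definition tensorK2 (V : finType) (e : rel V) : rel (V * bool) :=
  fun p q => e p.1 q.1 && (p.2 != q.2).

Definition hom_bip (V T : finType) (e : rel V) (g : rel T) (A B : {set T}) : nat :=
  hom_restr (tensorK2 e) g (fun p => if p.2 then mem B else mem A).

Definition cross_bipartite_swapping (V T : finType) (e : rel V) (g : rel T) : Prop :=
  forall A B : {set T}, hom_ind e g A * hom_ind e g B <= hom_bip e g A B.

Definition bipartite_rel (I : Type) (f : rel I) :=
  exists col : I -> bool, forall i j, f i j -> col i != col j.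

(* The graph H^U, where H is the blow-up of F (on 'I_m, adjacency Fadj) with
   blown-up graphs (V i, e i). Vertex (v, c) : {i & V i} * bool; c marks the
   copy (W or W'). *)
Definition blowupU (m : nat) (Fadj : rel 'I_m) (V : 'I_m -> finType)
    (e : forall i, rel (V i)) (U : {set 'I_m}) : rel ({i : 'I_m & V i} * bool) :=
  fun p q =>
    let: (u, c) := p in let: (v, d) := q in
    ((tag u == tag v) && e (tag u) (tagged u) (tagged_as u v)
       && (if tag u \in U then c != d else c == d))
    || (Fadj (tag u) (tag v) && (c == d)).

(* Main.v *)
Require Import Defs.
From mathcomp Require Import all_boot.
Set Implicit Arguments. Unset Strict Implicit. Unset Printing Implicit Defensive.

Lemma tagP (m : nat) (V : 'I_m -> finType) (u : 'I_m) (x : {i : 'I_m & V i}) :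
  tag x = u -> exists a : V u, x = Tagged V a.
Proof. by case: x => i a /= Hi; subst i; exists a. Qed.

Lemma untag_Tagged (m : nat) (V : 'I_m -> finType) (u : 'I_m) (R : Type)
  (t0 : R) (F : V u -> R) (a : V u) : untag t0 F (Tagged V a) = F a.
Proof. by rewrite (@untagE _ _ _ t0 u F (Tagged V a) (erefl u)). Qed.

Lemma card_fiber (A B : finType) (S : {set A}) (p : A -> B) :
  #|S| = \sum_(k : B) #|[set x in S | p x == k]|.
Proof.
rewrite -sum1_card (partition_big p predT) //=.
apply: eq_bigr => k _; rewrite -sum1_card; apply: eq_bigl => x; by rewrite !inE.
Qed.

Theorem lemma5p2 (TG : finType) (g : rel TG) (m : nat) (Fadj : rel 'I_m)
    (V : 'I_m -> finType) (e : forall i, rel (V i))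
    (U : {set 'I_m}) (u : 'I_m) :
  symmetric_rel g ->
  simple_rel Fadj -> bipartite_rel Fadj ->
  (forall i, simple_rel (e i)) ->
  (forall i, cross_bipartite_swapping (e i) g) ->
  u \notin U ->
  hom (blowupU Fadj e U) g <= hom (blowupU Fadj e (u |: U)) g.
Proof.
move=> _ [_ Firr] _ _ cbs uU.
rewrite /hom /hom_restr.
case: (pickP (@predT TG)) => [t0 _|T0]; last first.
  apply: subset_leq_card; apply/subsetP => f; rewrite !inE => /andP[H1 _].
  rewrite H1 /=; apply/forallP => x; by have := T0 (f x).
set R0 := blowupU Fadj e U; set R1 := blowupU Fadj e (u |: U).
pose X := ({i : 'I_m & V i} * bool)%type.
pose pi (f : {ffun X -> TG}) := [ffun x : X => if tag x.1 == u then t0 else f x].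
rewrite (card_fiber _ pi) (card_fiber _ pi).
apply: leq_sum => k _.
set F0 := [set f in _ | pi f == k].
set F1 := [set f in _ | pi f == k].
case: (set_0Vmem F0) => [->|[f0]]; first by rewrite cards0.
rewrite !inE /= => /andP[/andP[_ /forallP f0hom] /eqP pif0]; subst k.
pose Sd (c : bool) := [set t | [forall x : X, (tag x.1 != u) && (x.2 == c) ==>
   ((Fadj u (tag x.1) ==> g t (f0 x)) && (Fadj (tag x.1) u ==> g (f0 x) t))]].
have := cbs u (Sd false) (Sd true).
rewrite /hom_ind /hom_bip /hom_restr => cbsu.
apply: leq_trans (leq_trans _ cbsu) _.
- rewrite -cardsX.
  pose sp (f : {ffun X -> TG}) := ([ffun a : V u => f (Tagged V a, false)], [ffun a : V u => f (Tagged V a, true)]).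
  rewrite -(@card_in_imset _ _ sp F0); last first.
    move=> f1 f2; rewrite !inE => /andP[_ /eqP pi1] /andP[_ /eqP pi2] [E1 E2].
    apply/ffunP => -[x c].
    case: (eqVneq (tag x) u) => [/tagP [a ->] | ne].
      by case: c; [move: (congr1 (fun h : {ffun V u -> TG} => h a) E2) | move: (congr1 (fun h : {ffun V u -> TG} => h a) E1)]; rewrite !ffunE.
    by move: (congr1 (fun h : {ffun X -> TG} => h (x, c)) (etrans pi1 (esym pi2))); rewrite !ffunE /= (negbTE ne).
  apply: subset_leq_card; apply/subsetP => _ /imsetP[f fF0 ->].
  move: fF0; rewrite !inE => /andP[/andP[_ /forallP fhom] /eqP pif].
  have fout : forall x : X, tag x.1 != u -> f x = f0 x.
    move=> x ne; move: (congr1 (fun h : {ffun X -> TG} => h x) pif); by rewrite !ffunE (negbTE ne).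
  have side : forall c : bool, [ffun a : V u => f (Tagged V a, c)] \in
     [set h : {ffun V u -> TG} | [forall x, h x \in mem (Sd c)] & [forall x, forall y, e u x y ==> g (h x) (h y)]].
    move=> c; rewrite inE; apply/andP; split.
    - apply/forallP => a; rewrite ffunE inE; apply/forallP => -[x1 x2].
      apply/implyP => /andP[/= ne /eqP xc]; subst x2.
      rewrite -(fout (x1, c) ne).
      apply/andP; split; apply/implyP => Fx.
      + have := fhom (Tagged V a, c) => /forallP /(_ (x1, c)).
        by rewrite /R0 /blowupU /= eq_sym (negbTE ne) Fx eqxx.
      + have := fhom (x1, c) => /forallP /(_ (Tagged V a, c)).
        by rewrite /R0 /blowupU /= (negbTE ne) Fx eqxx.
    - apply/forallP => a; apply/forallP => b; apply/implyP => eab; rewrite !ffunE.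
      have := fhom (Tagged V a, c) => /forallP /(_ (Tagged V b, c)).
      by rewrite /R0 /blowupU /= eqxx tagged_asE eab (negbTE uU) eqxx.
  by move: (side false) (side true); rewrite !inE /sp /= => -> ->.
- pose glue (psi : {ffun (V u * bool) -> TG}) := [ffun x : X => if tag x.1 == u then untag t0 (fun a : V u => psi (a, x.2)) x.1 else f0 x].
  rewrite -[X in X <= _](@card_in_imset _ _ glue); last first.
    move=> p1 p2 _ _ E; apply/ffunP => -[a c].
    by move: (congr1 (fun h : {ffun X -> TG} => h (Tagged V a, c)) E); rewrite !ffunE /= eqxx !untag_Tagged.
  apply: subset_leq_card; apply/subsetP => _ /imsetP[psi psiS ->].
  move: psiS; rewrite !inE => /andP[/forallP psiA /forallP psihom].
  have psiS : forall (a : V u) c, psi (a, c) \in Sd c.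
    by move=> a c; have := psiA (a, c); case: c.
  apply/andP; split; last first.
    by apply/eqP/ffunP => x; rewrite /glue !ffunE; case: (tag x.1 == u).
  apply/andP; split; first by apply/forallP.
  apply/forallP => -[x c]; apply/forallP => -[y d].
  case: (eqVneq (tag x) u) => [/tagP [a ->] | nx]; case: (eqVneq (tag y) u) => [/tagP [b ->] | ny].
  + rewrite /R1 /blowupU /glue /= !ffunE /= eqxx tagged_asE setU11 (negbTE (Firr u)) !untag_Tagged orbF.
    by have := psihom (a, c) => /forallP /(_ (b, d)).
  + rewrite /R1 /blowupU /glue /= !ffunE /= eqxx [u == _]eq_sym (negbTE ny) !untag_Tagged /=.
    apply/implyP => /andP[Fu /eqP cd]; subst d.
    have := psiS a c; rewrite inE => /forallP /(_ (y, c)) /=.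
    by rewrite ny eqxx Fu /= => /andP[].
  + rewrite /R1 /blowupU /glue /= !ffunE /= eqxx (negbTE nx) !untag_Tagged /=.
    apply/implyP => /andP[Fu /eqP cd]; subst d.
    have := psiS b c; rewrite inE => /forallP /(_ (x, c)) /=.
    by rewrite nx eqxx Fu /= => /andP[].
  + rewrite /R1 /blowupU /glue /= !ffunE /= (negbTE nx) (negbTE ny) in_setU1 (negbTE nx) /=.
    by have := f0hom (x, c) => /forallP /(_ (y, d)); rewrite /R0 /blowupU /=.
Qed.
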